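(* Let $m\in[0,1]$ and $\varepsilon\ge0$. For all $z_1,z_2\in\mathbb{C}$ (with $z_1z_2\neq0$ if $m=\varepsilon=0$), setting $Z=\big((|z_1|^2+\varepsilon)^{\frac{m-1}{2}}z_1-(|z_2|^2+\varepsilon)^{\frac{m-1}{2}}z_2\big)\overline{(z_1-z_2)}$, we have $$2\sqrt m\,|\Im Z|\le(1-m)\Re Z.$$
   Context: When $m=1$ the factor $(|z|^2+\varepsilon)^0$ equals $1$. For $m<1$, $\varepsilon=0$ and $z=0$ the expression $(|z|^2)^{\frac{m-1}{2}}z$ is interpreted as $0$ (when $m>0$). *)

(* Defs.v *)
From HB Require Import structures.
From mathcomp Require Import all_boot all_order all_algebra.
From mathcomp Require Import all_classical all_reals all_analysis.
From mathcomp Require Import complex.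
Set Implicit Arguments. Unset Strict Implicit. Unset Printing Implicit Defensive.
Import Order.TTheory GRing.Theory Num.Theory.
Local Open Scope ring_scope.

(* F_{m,eps}(z) = (|z|^2 + eps)^((m-1)/2) z, with the real power powR.
   powR a 0 = 1 (so the factor is 1 when m = 1, for every a), and
   powR 0 x = 0 for x <> 0 (so for m < 1, eps = 0, z = 0 the value is 0,
   matching the paper's convention). *)
Definition Fme (R : realType) (m eps : R) (z : R[i]) : R[i] :=
  ((powR (Normc.normc z ^+ 2 + eps) ((m - 1) / 2))%:C * z)%C.

Definition Zme (R : realType) (m eps : R) (z1 z2 : R[i]) : R[i] :=
  ((Fme m eps z1 - Fme m eps z2) * conjc (z1 - z2))%C.

(* Main.v *)
Require Import Defs.
From HB Require Import structures.
From mathcomp Require Import all_boot all_order all_algebra.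
From mathcomp Require Import all_classical all_reals all_analysis.
From mathcomp Require Import complex.
From mathcomp Require Import ring lra.
Import Order.TTheory GRing.Theory Num.Theory.
Local Open Scope ring_scope.
Section W.
Variable R : realType.

Lemma young1 (m x : R) : 0 < m -> m < 1 -> 0 < x ->
  x `^ (1 - m) <= (1 - m) * x + m.
Proof.
move=> m0 m1 x0.
have p0 : 0 < (1 - m)^-1 by rewrite invr_gt0 subr_gt0.
have q0 : 0 < m^-1 by rewrite invr_gt0.
have := @conjugate_powR R (x `^ (1 - m)) 1 (1 - m)^-1 m^-1 (powR_ge0 _ _) ler01 p0 q0.
rewrite !invrK powR1 mulr1 -powRrM mulfV; last by rewrite subr_eq0 eq_sym lt_eqF.
rewrite /= powRr1 ?(ltW x0) // => H; apply: le_trans (H _) _; [ring | lra].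
Qed.

Definition hW (m : R) : R -> R :=
  (1 - m) \*: (id * (fun y : R => y `^ m) - cst 1) - (1 + m) \*: (id - (fun y : R => y `^ m)).

Lemma hWE m x : hW m x = (1 - m) * (x * x `^ m - 1) - (1 + m) * (x - x `^ m).
Proof. by []. Qed.

Lemma young2 (m x : R) : 0 <= m -> m <= 1 -> 0 < x ->
  x `^ (1 - m) <= (1 - m) * x + m.
Proof.
move=> m0 m1 x0.
have [->|mn0] := eqVneq m 0; first by rewrite subr0 powRr1 ?(ltW x0) // mul1r addr0.
have [->|mn1] := eqVneq m 1; first by rewrite subrr powRr0 mul0r add0r.
apply: young1 => //; rewrite lt_neqAle ?mn1 ?m1 // eq_sym mn0 //.
Qed.

Definition Dh (m x : R) := (1 - m) * (x * (m * x `^ (m - 1)) + x `^ m) -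
       (1 + m) * (1 - m * x `^ (m - 1)).

Lemma hW_der (m x : R) : 0 < x -> is_derive x 1 (hW m) (Dh m x).
Proof.
move=> x0.
have P := @is_derive1_powR R m x x0.
have I := @is_derive_id R R^o x 1.
have C := @is_derive_cst R R^o R^o (1:R) x 1.
have M := is_deriveM I P.
have B1 := is_deriveB M C.
have B2 := is_deriveB I P.
have Z1 := is_deriveZ (1 - m) B1.
have Z2 := is_deriveZ (1 + m) B2.
apply: is_derive_eq (is_deriveB Z1 Z2) _.
rewrite /Dh /= subr0.
change ((1 - m) * (x * (m * x `^ (m - 1)) + x `^ m * 1) - (1 + m) * (1 - m * x `^ (m - 1)) = (1 - m) * (x * (m * x `^ (m - 1)) + x `^ m) - (1 + m) * (1 - m * x `^ (m - 1))).
ring.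
Qed.

Lemma Dh_ge0 (m x : R) : 0 <= m -> m <= 1 -> 0 < x -> 0 <= Dh m x.
Proof.
move=> m0 m1 x0.
have Y := @young2 m x m0 m1 x0.
set s := x `^ (m - 1).
have s0 : 0 < s by rewrite powR_gt0.
have st : s * x = x `^ m.
  rewrite /s -[X in _ * X](powRr1 (ltW x0)) -powRD; first by congr (_ `^ _); ring.
  by rewrite (gt_eqF x0) implybT.
have su : s * x `^ (1 - m) = 1.
  rewrite /s -powRD; last by rewrite (gt_eqF x0) implybT.
  by rewrite (_ : m - 1 + (1 - m) = 0) ?powRr0 //; ring.
rewrite /Dh -st.
have : 1 <= s * ((1 - m) * x + m) by rewrite -[X in X <= _]su ler_pM2l.
move=> H.
have -> : (1 - m) * (x * (m * s) + s * x) - (1 + m) * (1 - m * s) =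
  (1 + m) * (s * ((1 - m) * x + m) - 1) by ring.
by rewrite mulr_ge0 // ?subr_ge0 //; lra.
Qed.

Lemma hW_ge0 (m r : R) : 0 <= m -> m <= 1 -> 1 <= r -> 0 <= hW m r.
Proof.
move=> m0 m1 r1.
have -> : 0 = hW m 1 by rewrite hWE powR1 /=; ring.
have dv : forall x, 0 < x -> derivable (hW m) x 1.
  by move=> x x0; case: (@hW_der m x x0).
apply: (@ger0_derive1_le_cc R (hW m) 1 r).
- move=> x; rewrite in_itv /= => /andP[x1 _]; apply: dv; exact: lt_trans ltr01 x1.
- move=> x; rewrite in_itv /= => /andP[x1 _].
  have x0 : 0 < x := lt_trans ltr01 x1.
  by rewrite derive1E (@derive_val _ _ _ _ _ _ _ (@hW_der m x x0)) Dh_ge0.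
- apply: derivable_within_continuous => x; rewrite in_itv /= => /andP[x1 _].
  by apply: dv; exact: lt_le_trans ltr01 x1.
- by rewrite in_itv /= lexx r1.
- by rewrite in_itv /= r1 lexx.
- exact: r1.
Qed.
End W.
Section A.
Variable R : realType.

Lemma alg (m n1 n2 t1 t2 g1 g2 : R) : 0 <= m -> m <= 1 ->
  0 < n2 -> n2 <= n1 -> 0 < t2 -> t2 <= t1 -> n2 * t1 <= n1 * t2 ->
  0 <= g2 -> g2 * t1 <= g1 * t2 -> g1 * n2 <= g2 * n1 ->
  (1 + m) * (n1 * t2 - n2 * t1) <= (1 - m) * (n1 * t1 - n2 * t2) ->
  4 * m * (g1 * n2 - g2 * n1) ^+ 2 <= (1 - m) ^+ 2 * (g1 ^+ 2 - g2 ^+ 2) * (n1 ^+ 2 - n2 ^+ 2).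
Proof.
move=> m0 m1 n20 n21 t20 t21 nt g20 gt gn W.
set P := n1 * t1 - n2 * t2; set Q := n1 * t2 - n2 * t1.
have Q0 : 0 <= Q by rewrite /Q subr_ge0.
have S1 : ((1 + m) * Q) ^+ 2 <= ((1 - m) * P) ^+ 2.
  have A0 : 0 <= (1 + m) * Q by rewrite mulr_ge0 //; lra.
  by rewrite ler_sqr ?nnegrE // (le_trans A0 W).
have S2 : 4 * m * Q ^+ 2 <= (1 - m) ^+ 2 * (t1 ^+ 2 - t2 ^+ 2) * (n1 ^+ 2 - n2 ^+ 2).
  have -> : (1 - m) ^+ 2 * (t1 ^+ 2 - t2 ^+ 2) * (n1 ^+ 2 - n2 ^+ 2) =
            ((1 - m) * P) ^+ 2 - (1 - m) ^+ 2 * Q ^+ 2 by rewrite /P /Q; ring.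
  have : 4 * m * Q ^+ 2 = ((1 + m) * Q) ^+ 2 - (1 - m) ^+ 2 * Q ^+ 2 by ring.
  lra.
set l := g2 / t2.
have l0 : 0 <= l by rewrite /l divr_ge0 // ltW.
have lt2 : l * t2 = g2 by rewrite /l mulfVK // gt_eqF.
have lt1 : l * t1 <= g1.
  by rewrite /l mulrAC ler_pdivrMr // mulrC.
have D0 : 0 <= g2 * n1 - g1 * n2 by rewrite subr_ge0.
have D1 : g2 * n1 - g1 * n2 <= l * Q.
  rewrite /Q -lt2.
  have : l * t1 * n2 <= g1 * n2 by rewrite ler_pM2r.
  have -> : l * (n1 * t2 - n2 * t1) = l * t2 * n1 - l * t1 * n2 by ring.
  lra.
have S5 : l ^+ 2 * (t1 ^+ 2 - t2 ^+ 2) <= g1 ^+ 2 - g2 ^+ 2.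
  have -> : l ^+ 2 * (t1 ^+ 2 - t2 ^+ 2) = (l * t1) ^+ 2 - (l * t2) ^+ 2 by ring.
  have t10 : 0 <= t1 by exact: le_trans (ltW t20) t21.
  have lt10 : 0 <= l * t1 by exact: mulr_ge0.
  by rewrite lt2 lerD2r ler_sqr ?nnegrE // (le_trans lt10 lt1).
have E1 : (g1 * n2 - g2 * n1) ^+ 2 <= (l * Q) ^+ 2.
  by rewrite -sqrrN opprB ler_sqr ?nnegrE // mulr_ge0.
have N0 : 0 <= n1 ^+ 2 - n2 ^+ 2.
  by rewrite subr_ge0 ler_sqr ?nnegrE ?(ltW n20) // (le_trans (ltW n20)).
have E2 : 4 * m * (l * Q) ^+ 2 <= l ^+ 2 * ((1 - m) ^+ 2 * (t1 ^+ 2 - t2 ^+ 2) * (n1 ^+ 2 - n2 ^+ 2)).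
  have -> : 4 * m * (l * Q) ^+ 2 = l ^+ 2 * (4 * m * Q ^+ 2) by ring.
  by rewrite ler_wpM2l // exprn_ge0.
have E3 : l ^+ 2 * ((1 - m) ^+ 2 * (t1 ^+ 2 - t2 ^+ 2) * (n1 ^+ 2 - n2 ^+ 2)) <=
          (1 - m) ^+ 2 * (g1 ^+ 2 - g2 ^+ 2) * (n1 ^+ 2 - n2 ^+ 2).
  have -> : l ^+ 2 * ((1 - m) ^+ 2 * (t1 ^+ 2 - t2 ^+ 2) * (n1 ^+ 2 - n2 ^+ 2)) =
     (1 - m) ^+ 2 * (l ^+ 2 * (t1 ^+ 2 - t2 ^+ 2)) * (n1 ^+ 2 - n2 ^+ 2) by ring.
  by rewrite ler_wpM2r // ler_wpM2l // exprn_ge0 // subr_ge0.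
apply: le_trans E3; apply: le_trans E2.
by rewrite ler_wpM2l // mulr_ge0 //; lra.
Qed.

Lemma fin (m a b N1 N2 u v : R) : 0 <= m -> m <= 1 -> 0 <= a -> 0 <= b ->
  0 <= N1 -> 0 <= N2 -> u ^+ 2 + v ^+ 2 = N1 * N2 ->
  4 * m * (a - b) ^+ 2 * (N1 * N2) <= (1 - m) ^+ 2 * (a ^+ 2 * N1 - b ^+ 2 * N2) * (N1 - N2) ->
  2 * Num.sqrt m * `|(a - b) * v| <= (1 - m) * (a * N1 + b * N2 - (a + b) * u).
Proof.
move=> m0 m1 a0 b0 N10 N20 uv KL.
set K := (1 - m) * (a + b); set L := 2 * Num.sqrt m * `|a - b|.
set M := (1 - m) * (a * N1 + b * N2).
have M0 : 0 <= M by rewrite /M mulr_ge0 ?subr_ge0 // addr_ge0 // mulr_ge0.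
have L2 : L ^+ 2 = 4 * m * (a - b) ^+ 2.
  by rewrite /L !exprMn sqr_sqrtr // real_normK ?num_real //; ring.
have V2 : `|v| ^+ 2 = v ^+ 2 by rewrite real_normK ?num_real.
set T := K * u + L * `|v|.
have CS : T ^+ 2 <= (K ^+ 2 + L ^+ 2) * (N1 * N2).
  rewrite -uv -subr_ge0.
  have -> : (K ^+ 2 + L ^+ 2) * (u ^+ 2 + v ^+ 2) - T ^+ 2 = (K * `|v| - L * u) ^+ 2.
    by rewrite /T -V2; ring.
  exact: sqr_ge0.
have MM : (K ^+ 2 + L ^+ 2) * (N1 * N2) <= M ^+ 2.
  have -> : M ^+ 2 = K ^+ 2 * (N1 * N2) + (1 - m) ^+ 2 * (a ^+ 2 * N1 - b ^+ 2 * N2) * (N1 - N2).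
    by rewrite /M /K; ring.
  rewrite mulrDl lerD2l L2; exact: KL.
have TM : T <= M.
  have : T ^+ 2 <= M ^+ 2 := le_trans CS MM.
  case: (lerP T 0) => [T0 _|T0]; first exact: le_trans T0 M0.
  by rewrite ler_sqr ?nnegrE // ltW.
have -> : 2 * Num.sqrt m * `|(a - b) * v| = L * `|v| by rewrite /L normrM mulrA.
have -> : (1 - m) * (a * N1 + b * N2 - (a + b) * u) = M - K * u by rewrite /M /K; ring.
move: TM; rewrite /T; lra.
Qed.
End A.

Section K.
Variable R : realType.

Lemma KLn (m eps n1 n2 : R) : 0 <= m -> m <= 1 -> 0 <= eps -> 0 <= n2 -> n2 <= n1 ->
  4 * m * ((n1 ^+ 2 + eps) `^ ((m - 1) / 2) - (n2 ^+ 2 + eps) `^ ((m - 1) / 2)) ^+ 2 * (n1 ^+ 2 * n2 ^+ 2)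
  <= (1 - m) ^+ 2 * (((n1 ^+ 2 + eps) `^ ((m - 1) / 2)) ^+ 2 * n1 ^+ 2
       - ((n2 ^+ 2 + eps) `^ ((m - 1) / 2)) ^+ 2 * n2 ^+ 2) * (n1 ^+ 2 - n2 ^+ 2).
Proof.
move=> m0 m1 e0 n20 n21.
set a := (n1 ^+ 2 + eps) `^ _; set b := (n2 ^+ 2 + eps) `^ _.
have [n2z|n2p] := eqVneq n2 0.
  rewrite n2z (expr0n _ 2) /= !mulr0 !subr0.
  apply: mulr_ge0; [apply: mulr_ge0; [exact: sqr_ge0 | apply: mulr_ge0; exact: sqr_ge0] | exact: sqr_ge0].
have n2p' : 0 < n2 by rewrite lt_neqAle eq_sym n2p.
have n1p : 0 < n1 by exact: lt_le_trans n2p' n21.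
set q := (1 - m) / 2.
have q0 : 0 <= q by rewrite /q divr_ge0 // subr_ge0.
have mq : (m - 1) / 2 = - q by rewrite /q; field.
set A1 := (n1 ^+ 2 + eps) `^ q; set A2 := (n2 ^+ 2 + eps) `^ q.
have A1p : 0 < A1 by rewrite powR_gt0 // ltr_pwDl // exprn_gt0.
have A2p : 0 < A2 by rewrite powR_gt0 // ltr_pwDl // exprn_gt0.
have aE : a = A1^-1 by rewrite /a mq powRN.
have bE : b = A2^-1 by rewrite /b mq powRN.
have A21 : A2 <= A1.
  apply: ge0_ler_powR => //; rewrite ?nnegrE ?addr_ge0 ?exprn_ge0 ?(ltW n1p) ?(ltW n2p') //.
  by rewrite lerD2r ler_sqr ?nnegrE ?(ltW n2p') ?(ltW n1p).
have ab : a <= b by rewrite aE bE lef_pV2 ?posrE.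
set t1 := n1 `^ m; set t2 := n2 `^ m.
set e1 := n1 `^ (1 - m); set e2 := n2 `^ (1 - m).
have Fte : forall n : R, 0 < n -> n `^ (1 - m) * n `^ m = n.
  move=> n n0; rewrite -powRD; last by rewrite (gt_eqF n0) implybT.
  by rewrite subrK powRr1 // ltW.
have Fe : forall n : R, 0 < n -> n `^ (1 - m) = (n ^+ 2) `^ q.
  move=> n n0; rewrite -(powR_mulrn 2 (ltW n0)) -powRrM; congr (_ `^ _).
  by rewrite /q; field.
have t2p : 0 < t2 by rewrite powR_gt0.
have t21 : t2 <= t1 by apply: ge0_ler_powR; rewrite ?nnegrE ?(ltW n2p') ?(ltW n1p).
have e21 : e2 <= e1.
  by apply: ge0_ler_powR; rewrite ?nnegrE ?(ltW n2p') ?(ltW n1p) ?subr_ge0.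
have e2p : 0 < e2 by rewrite powR_gt0.
have FeA : e2 * A1 <= e1 * A2.
  rewrite /e1 /e2 !Fe // /A1 /A2 -!powRM ?addr_ge0 ?exprn_ge0 ?(ltW n1p) ?(ltW n2p') //.
  apply: ge0_ler_powR => //; rewrite ?nnegrE ?mulr_ge0 ?addr_ge0 ?exprn_ge0 ?(ltW n1p) ?(ltW n2p') //.
  have : n2 ^+ 2 <= n1 ^+ 2 by rewrite ler_sqr ?nnegrE ?(ltW n2p') ?(ltW n1p).
  nra.
have n1E : n1 = e1 * t1 by rewrite /e1 /t1 Fte.
have n2E : n2 = e2 * t2 by rewrite /e2 /t2 Fte.
have be : b * e2 <= a * e1.
  rewrite aE bE mulrC [_ * e1]mulrC ler_pdivrMr // mulrAC ler_pdivlMr //.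
have rn : n1 / n2 * n2 = n1 by rewrite mulfVK // gt_eqF.
have st : (n1 / n2) `^ m * t2 = t1.
  by rewrite /t1 /t2 -powRM ?rn // divr_ge0 // ltW.
have W : (1 + m) * (n1 * t2 - n2 * t1) <= (1 - m) * (n1 * t1 - n2 * t2).
  have H := @hW_ge0 R m (n1 / n2) m0 m1.
  have r1 : 1 <= n1 / n2 by rewrite ler_pdivlMr // mul1r.
  have H2 := mulr_ge0 (mulr_ge0 (ltW n2p') (ltW t2p)) (H r1).
  rewrite hWE in H2; rewrite -subr_ge0.
  have -> : (1 - m) * (n1 * t1 - n2 * t2) - (1 + m) * (n1 * t2 - n2 * t1) =
     n2 * t2 * ((1 - m) * (n1 / n2 * (n1 / n2) `^ m - 1) - (1 + m) * (n1 / n2 - (n1 / n2) `^ m)).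
    rewrite -[in LHS]rn -[in LHS]st; ring.
  exact: H2.
have a0 : 0 <= a by rewrite powR_ge0.
have b0 : 0 <= b by rewrite powR_ge0.
have := @alg R m n1 n2 t1 t2 (a * n1) (b * n2) m0 m1 n2p' n21 t2p t21.
have nt : n2 * t1 <= n1 * t2.
  have tt : 0 <= t2 * t1 by rewrite mulr_ge0 // ltW // (lt_le_trans t2p t21).
  have := ler_wpM2r tt e21.
  have -> : n2 * t1 = e2 * (t2 * t1) by rewrite n2E mulrA.
  by have -> : n1 * t2 = e1 * (t2 * t1) by rewrite n1E -mulrA [t1 * _]mulrC.
have g20 : 0 <= b * n2 by rewrite mulr_ge0 // ltW.
have gt : b * n2 * t1 <= a * n1 * t2.
  have tt : 0 <= t2 * t1 by rewrite mulr_ge0 // ltW // (lt_le_trans t2p t21).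
  have := ler_wpM2r tt be.
  have -> : b * n2 * t1 = b * e2 * (t2 * t1) by rewrite n2E; ring.
  by have -> : a * n1 * t2 = a * e1 * (t2 * t1) by rewrite n1E; ring.
have gn : a * n1 * n2 <= b * n2 * n1.
  have := ler_wpM2r (mulr_ge0 (ltW n1p) (ltW n2p')) ab.
  have -> : a * n1 * n2 = a * (n1 * n2) by ring.
  by have -> : b * n2 * n1 = b * (n1 * n2) by ring.
move=> /(_ nt g20 gt gn W).
have -> : (a * n1 * n2 - b * n2 * n1) ^+ 2 = (a - b) ^+ 2 * (n1 ^+ 2 * n2 ^+ 2) by ring.
have -> : (a * n1) ^+ 2 - (b * n2) ^+ 2 = a ^+ 2 * n1 ^+ 2 - b ^+ 2 * n2 ^+ 2 by ring.
by rewrite mulrA.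
Qed.

Lemma KLs (m eps n1 n2 : R) : 0 <= m -> m <= 1 -> 0 <= eps -> 0 <= n1 -> 0 <= n2 ->
  4 * m * ((n1 ^+ 2 + eps) `^ ((m - 1) / 2) - (n2 ^+ 2 + eps) `^ ((m - 1) / 2)) ^+ 2 * (n1 ^+ 2 * n2 ^+ 2)
  <= (1 - m) ^+ 2 * (((n1 ^+ 2 + eps) `^ ((m - 1) / 2)) ^+ 2 * n1 ^+ 2
       - ((n2 ^+ 2 + eps) `^ ((m - 1) / 2)) ^+ 2 * n2 ^+ 2) * (n1 ^+ 2 - n2 ^+ 2).
Proof.
move=> m0 m1 e0 n10 n20.
case: (lerP n2 n1) => [h|h]; first exact: KLn.
have := @KLn m eps n2 n1 m0 m1 e0 n10 (ltW h).
set a := (n1 ^+ 2 + eps) `^ _; set b := (n2 ^+ 2 + eps) `^ _.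
move=> H.
have -> : 4 * m * (a - b) ^+ 2 * (n1 ^+ 2 * n2 ^+ 2) = 4 * m * (b - a) ^+ 2 * (n2 ^+ 2 * n1 ^+ 2) by ring.
have -> : (1 - m) ^+ 2 * (a ^+ 2 * n1 ^+ 2 - b ^+ 2 * n2 ^+ 2) * (n1 ^+ 2 - n2 ^+ 2) =
  (1 - m) ^+ 2 * (b ^+ 2 * n2 ^+ 2 - a ^+ 2 * n1 ^+ 2) * (n2 ^+ 2 - n1 ^+ 2) by ring.
exact: H.
Qed.
End K.

Theorem lemma5p7 (R : realType) (m eps : R) (z1 z2 : R[i]) :
  0 <= m -> m <= 1 -> 0 <= eps ->
  (m = 0 -> eps = 0 -> (z1 * z2 != 0)%C) ->
  2 * Num.sqrt m * `|complex.Im (Zme m eps z1 z2)| <= (1 - m) * complex.Re (Zme m eps z1 z2).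
Proof.
move=> m0 m1 e0 _.
case: z1 => x1 y1; case: z2 => x2 y2.
rewrite /Zme /Fme /=.
set n1 := Num.sqrt (x1 ^+ 2 + y1 ^+ 2); set n2 := Num.sqrt (x2 ^+ 2 + y2 ^+ 2).
have N1 : n1 ^+ 2 = x1 ^+ 2 + y1 ^+ 2 by rewrite sqr_sqrtr // addr_ge0 // sqr_ge0.
have N2 : n2 ^+ 2 = x2 ^+ 2 + y2 ^+ 2 by rewrite sqr_sqrtr // addr_ge0 // sqr_ge0.
have := @KLs R m eps n1 n2 m0 m1 e0 (sqrtr_ge0 (x1 ^+ 2 + y1 ^+ 2)) (sqrtr_ge0 (x2 ^+ 2 + y2 ^+ 2)).
rewrite -/n1 -/n2.
set a := (n1 ^+ 2 + eps) `^ _; set b := (n2 ^+ 2 + eps) `^ _.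
move=> KL.
have := @fin R m a b (n1 ^+ 2) (n2 ^+ 2) (x1 * x2 + y1 * y2) (x1 * y2 - x2 * y1) m0 m1
  (powR_ge0 _ _) (powR_ge0 _ _) (exprn_ge0 2 (sqrtr_ge0 _)) (exprn_ge0 2 (sqrtr_ge0 _)).
rewrite N1 N2 in KL *.
have uv : (x1 * x2 + y1 * y2) ^+ 2 + (x1 * y2 - x2 * y1) ^+ 2 =
  (x1 ^+ 2 + y1 ^+ 2) * (x2 ^+ 2 + y2 ^+ 2) by ring.
move=> /(_ uv KL) H.
have -> : (a * x1 - 0 * y1 - (b * x2 - 0 * y2)) * - (y1 - y2) +
    (a * y1 + 0 * x1 - (b * y2 + 0 * x2)) * (x1 - x2) = (a - b) * (x1 * y2 - x2 * y1) by ring.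
have -> : (a * x1 - 0 * y1 - (b * x2 - 0 * y2)) * (x1 - x2) -
   (a * y1 + 0 * x1 - (b * y2 + 0 * x2)) * - (y1 - y2) =
   a * (x1 ^+ 2 + y1 ^+ 2) + b * (x2 ^+ 2 + y2 ^+ 2) - (a + b) * (x1 * x2 + y1 * y2) by ring.
exact: H.
Qed.
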